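(* Let $(D,\mathrm{left},\mathrm{right})$ be an interval domain and consider the poset $(\max(D),\le)$, with $\ll$, $\Downarrow$, $\Uparrow$, $\bigvee$, $\bigwedge$ computed in $(\max(D),\le)$. Then: (i) for every $x\in\max(D)$, the set $\Downarrow x$ is $\le$-directed with $\bigvee\Downarrow x=x$; (ii) for all $a,b\in\max(D)$: $a\ll b$ iff for every $\le$-filtered $S\subseteq\max(D)$ having an infimum, $\bigwedge S\le a$ implies $s\le b$ for some $s\in S$; (iii) for every $x\in\max(D)$, the set $\Uparrow x$ is $\le$-filtered with $\bigwedge\Uparrow x=x$. Thus $(\max(D),\le)$ is a bicontinuous poset.
   Context: For a poset $(P,\sqsubseteq)$: directed (resp. filtered) sets are nonempty sets in which any two elements have an upper (resp. lower) bound in the set; $\bigsqcup S$ is the supremum; $x\ll y$ iff for every directed $S\subseteq P$ with a supremum, $y\sqsubseteq\bigsqcup S$ implies $x\sqsubseteq s$ for some $s\in S$; $\Uparrow x=\{a: x\ll a\}$, $\Downarrow x=\{a:a\ll x\}$. $P$ is continuous if there is $B\subseteq P$ such that for each $x$, $B\cap\Downarrow x$ contains a directed set with supremum $x$. A continuous poset is bicontinuous if (1) $x\ll y$ iff for every filtered $S$ having an infimum, $\bigwedge S\sqsubseteq x$ implies $s\sqsubseteq y$ for some $s\in S$; and (2) each $\Uparrow x$ is filtered with infimum $x$. A continuous dcpo is a continuous poset in which every directed set has a supremum. $\max(P)$ is the set of maximal elements, $x\sqcap y$ the infimum of $\{x,y\}$. The Scott topology consists of upper sets $U$ such that $\bigsqcup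 S\in U$ implies $S\cap U\ne\emptyset$ for directed $S$. An interval poset is a poset $D$ with functions $\mathrm{left},\mathrm{right}:D\to\max(D)$ such that (only named infima are assumed to exist): (i) $x=\mathrm{left}(x)\sqcap\mathrm{right}(x)$ for all $x$; (ii) if $\mathrm{right}(x)=\mathrm{left}(y)$ then $\mathrm{left}(x\sqcap y)=\mathrm{left}(x)$ and $\mathrm{right}(x\sqcap y)=\mathrm{right}(y)$; (iii) for $p\in\max(D)$ with $x\sqsubseteq p$: $\mathrm{left}(\mathrm{left}(x)\sqcap p)=\mathrm{left}(x)$, $\mathrm{right}(\mathrm{left}(x)\sqcap p)=p$, $\mathrm{left}(p\sqcap\mathrm{right}(x))=p$, $\mathrm{right}(p\sqcap\mathrm{right}(x))=\mathrm{right}(x)$. On $\max(D)$ define $a\le b$ iff $a=\mathrm{left}(z)$, $b=\mathrm{right}(z)$ for some $z\in D$; this is a partial order. For $p,q\in\max(D)$ let $[p,\cdot]=\mathrm{left}^{-1}(p)$ and $[\cdot,q]=\mathrm{right}^{-1}(q)$, regarded as subposets of $D$. An interval domain is an interval poset $(D,\mathrm{left},\mathrm{right})$ such that $D$ is a continuous dcpo and: (i) if $p\in\Uparrow x\cap\max(D)$ then $\Uparrow(\mathrm{left}(x)\sqcap p)\ne\emptyset$ and $\Uparrow(p\sqcap\mathrm{right}(x))\ne\emptyset$; (ii) for all $x\in D$ the following are equivalent: (a) $\Uparrow x\ne\emptyset$; (b) for all $y\in[\mathrm{left}(x),\cdot]$ with $y\sqsubseteq x$, $y\ll\mathrm{right}(y)$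 in the poset $[\cdot,\mathrm{right}(y)]$; (c) for all $y\in[\cdot,\mathrm{right}(x)]$ with $y\sqsubseteq x$, $y\ll\mathrm{left}(y)$ in the poset $[\mathrm{left}(y),\cdot]$; (iii)(a) for every directed $S\subseteq[p,\cdot]$, $\mathrm{left}(\bigsqcup S)=p$ and $\mathrm{right}(\bigsqcup S)=\mathrm{right}(\bigsqcup T)$ for every directed $T\subseteq[q,\cdot]$ with $\mathrm{right}(T)=\mathrm{right}(S)$ (images); (iii)(b) for every directed $S\subseteq[\cdot,q]$, $\mathrm{right}(\bigsqcup S)=q$ and $\mathrm{left}(\bigsqcup S)=\mathrm{left}(\bigsqcup T)$ for every directed $T\subseteq[\cdot,p]$ with $\mathrm{left}(T)=\mathrm{left}(S)$; (iv) for all $x\in D$, $\{y\in\max(D): x\sqsubseteq y\}$ is compact in the relative Scott topology. *)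

(* Defs.v *)
(* Posets are given by a carrier predicate
   [P : T -> Prop] together with a relation [R : T -> T -> Prop];
   subsets are predicates [T -> Prop].  All order-theoretic notions
   (suprema, way-below, ...) are computed inside the subposet (P, R). *)
From Stdlib Require Import List.

Definition full {T : Type} : T -> Prop := fun _ => True.

Definition subset {T : Type} (A B : T -> Prop) : Prop := forall x, A x -> B x.

Definition partial_order_on {T : Type} (P : T -> Prop) (R : T -> T -> Prop) : Prop :=
  (forall x, P x -> R x x) /\
  (forall x y, P x -> P y -> R x y -> R y x -> x = y) /\
  (forall x y z, P x -> P y -> P z -> R x y -> R y z -> R x z).

Definition directed {T : Type} (R : T -> T -> Prop) (S : T -> Prop) : Prop :=
  (exists x, S x) /\
  (forall x y, S x -> S y -> exists z, S z /\ R x z /\ R y z).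

Definition filtered {T : Type} (R : T -> T -> Prop) (S : T -> Prop) : Prop :=
  (exists x, S x) /\
  (forall x y, S x -> S y -> exists z, S z /\ R z x /\ R z y).

Definition is_ub {T : Type} (R : T -> T -> Prop) (S : T -> Prop) (u : T) : Prop :=
  forall s, S s -> R s u.

Definition is_lb {T : Type} (R : T -> T -> Prop) (S : T -> Prop) (u : T) : Prop :=
  forall s, S s -> R u s.

Definition is_sup_in {T : Type} (P : T -> Prop) (R : T -> T -> Prop)
  (S : T -> Prop) (u : T) : Prop :=
  P u /\ is_ub R S u /\ (forall v, P v -> is_ub R S v -> R u v).

Definition is_inf_in {T : Type} (P : T -> Prop) (R : T -> T -> Prop)
  (S : T -> Prop) (u : T) : Prop :=
  P u /\ is_lb R S u /\ (forall v, P v -> is_lb R S v -> R v u).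

Definition way_below_in {T : Type} (P : T -> Prop) (R : T -> T -> Prop) (x y : T) : Prop :=
  forall S : T -> Prop, subset S P -> directed R S ->
  forall s, is_sup_in P R S s -> R y s -> exists z, S z /\ R x z.

Definition ddarrow_in {T : Type} (P : T -> Prop) (R : T -> T -> Prop) (x : T) : T -> Prop :=
  fun a => P a /\ way_below_in P R a x.

Definition uuarrow_in {T : Type} (P : T -> Prop) (R : T -> T -> Prop) (x : T) : T -> Prop :=
  fun a => P a /\ way_below_in P R x a.

Definition continuous_poset {T : Type} (P : T -> Prop) (R : T -> T -> Prop) : Prop :=
  partial_order_on P R /\
  exists B : T -> Prop, subset B P /\
    forall x, P x -> exists S : T -> Prop,
      subset S (fun a => B a /\ ddarrow_in P R x a) /\ directed R S /\ is_sup_in P R S x.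

Definition bicontinuous_poset {T : Type} (P : T -> Prop) (R : T -> T -> Prop) : Prop :=
  continuous_poset P R /\
  (forall x y, P x -> P y ->
     (way_below_in P R x y <->
      forall S : T -> Prop, subset S P -> filtered R S ->
      forall m, is_inf_in P R S m -> R m x -> exists s, S s /\ R s y)) /\
  (forall x, P x -> filtered R (uuarrow_in P R x) /\ is_inf_in P R (uuarrow_in P R x) x).

Definition continuous_dcpo {T : Type} (P : T -> Prop) (R : T -> T -> Prop) : Prop :=
  continuous_poset P R /\
  forall S : T -> Prop, subset S P -> directed R S -> exists s, is_sup_in P R S s.

Definition maximal {D : Type} (le : D -> D -> Prop) (x : D) : Prop :=
  forall y, le x y -> y = x.

Definition is_inf2 {D : Type} (le : D -> D -> Prop) (x y z : D) : Prop :=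
  is_inf_in full le (fun w => w = x \/ w = y) z.

Definition scott_open {D : Type} (le : D -> D -> Prop) (U : D -> Prop) : Prop :=
  (forall x y, U x -> le x y -> U y) /\
  (forall (S : D -> Prop) s, directed le S -> is_sup_in full le S s -> U s ->
     exists z, S z /\ U z).

Definition relatively_scott_compact {D : Type} (le : D -> D -> Prop) (K : D -> Prop) : Prop :=
  forall (I : Type) (V : I -> D -> Prop),
    (forall i, exists U, scott_open le U /\ forall y, V i y <-> (U y /\ K y)) ->
    (forall y, K y -> exists i, V i y) ->
    exists l : list I, forall y, K y -> exists i, In i l /\ V i y.

Definition interval_poset {D : Type} (le : D -> D -> Prop) (left right : D -> D) : Prop :=
  partial_order_on full le /\
  (forall x, maximal le (left x) /\ maximal le (right x)) /\
  (forall x, is_inf2 le (left x) (right x) x) /\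
  (forall x y, right x = left y ->
     exists z, is_inf2 le x y z /\ left z = left x /\ right z = right y) /\
  (forall x p, maximal le p -> le x p ->
     (exists z, is_inf2 le (left x) p z /\ left z = left x /\ right z = p) /\
     (exists z, is_inf2 le p (right x) z /\ left z = p /\ right z = right x)).

Definition max_le {D : Type} (left right : D -> D) (a b : D) : Prop :=
  exists z, left z = a /\ right z = b.

Definition interval_domain {D : Type} (le : D -> D -> Prop) (left right : D -> D) : Prop :=
  interval_poset le left right /\
  continuous_dcpo full le /\
  (forall x p, maximal le p -> way_below_in full le x p ->
     (forall z, is_inf2 le (left x) p z -> exists w, way_below_in full le z w) /\
     (forall z, is_inf2 le p (right x) z -> exists w, way_below_in full le z w)) /\
  (forall x,
     let a := exists w, way_below_in full le x w in
     let b := forall y, left y = left x -> le y x ->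
                way_below_in (fun w => right w = right y) le y (right y) in
     let c := forall y, right y = right x -> le y x ->
                way_below_in (fun w => left w = left y) le y (left y) in
     (a <-> b) /\ (a <-> c)) /\
  (forall p q (S : D -> Prop), maximal le p -> maximal le q ->
     directed le S -> subset S (fun w => left w = p) ->
     forall s, is_sup_in full le S s ->
       left s = p /\
       (forall (T : D -> Prop) t, directed le T -> subset T (fun w => left w = q) ->
          (forall r, (exists u, S u /\ right u = r) <-> (exists u, T u /\ right u = r)) ->
          is_sup_in full le T t -> right s = right t)) /\
  (forall p q (S : D -> Prop), maximal le p -> maximal le q ->
     directed le S -> subset S (fun w => right w = q) ->
     forall s, is_sup_in full le S s ->
       right s = q /\
       (forall (T : D -> Prop) t, directed le T -> subset T (fun w => right w = p) ->
          (forall r, (exists u, S u /\ left u = r) <-> (exists u, T u /\ left u = r)) ->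
          is_sup_in full le T t -> left s = left t)) /\
  (forall x, relatively_scott_compact le (fun y => maximal le y /\ le x y)).

(* Main.v *)
Require Import Defs.


Lemma po_refl {D} {le : D->D->Prop} {left right : D -> D}
  (HP : interval_poset le left right) x : le x x.
Proof. destruct HP as [[r [a t]] _]. apply r; exact I. Qed.

Lemma po_anti {D} {le : D->D->Prop} {left right : D -> D}
  (HP : interval_poset le left right) x y : le x y -> le y x -> x = y.
Proof. destruct HP as [[r [a t]] _]. intros; apply a; auto; exact I. Qed.

Lemma po_trans {D} {le : D->D->Prop} {left right : D -> D}
  (HP : interval_poset le left right) x y z : le x y -> le y z -> le x z.
Proof. destruct HP as [[r [a t]] _]. intros; eapply t; eauto; exact I. Qed.

Lemma inf2_lb {D} {le : D->D->Prop} a b z :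
  is_inf2 le a b z -> le z a /\ le z b.
Proof. intros [_ [H _]]. split; apply H; auto. Qed.

Lemma inf2_glb {D} {le : D->D->Prop} a b z w :
  is_inf2 le a b z -> le w a -> le w b -> le w z.
Proof. intros [_ [_ H]] Ha Hb. apply H. exact I. intros s [->| ->]; auto. Qed.

Lemma lr_inf {D} {le : D->D->Prop} {left right : D -> D}
  (HP : interval_poset le left right) x : is_inf2 le (left x) (right x) x.
Proof. destruct HP as [_ [_ [H _]]]. apply H. Qed.

Lemma maxL {D} {le : D->D->Prop} {left right : D -> D}
  (HP : interval_poset le left right) x : maximal le (left x).
Proof. destruct HP as [_ [H _]]. apply H. Qed.

Lemma maxR {D} {le : D->D->Prop} {left right : D -> D}
  (HP : interval_poset le left right) x : maximal le (right x).
Proof. destruct HP as [_ [H _]]. apply H. Qed.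

Lemma le_left {D} {le : D->D->Prop} {left right : D -> D}
  (HP : interval_poset le left right) x : le x (left x).
Proof. apply (inf2_lb _ _ _ (lr_inf HP x)). Qed.

Lemma le_right {D} {le : D->D->Prop} {left right : D -> D}
  (HP : interval_poset le left right) x : le x (right x).
Proof. apply (inf2_lb _ _ _ (lr_inf HP x)). Qed.

Lemma B0 {D} {le : D->D->Prop} {left right : D -> D}
  (HP : interval_poset le left right) z z' :
  left z = left z' -> right z = right z' -> z = z'.
Proof.
  intros Hl Hr. apply (po_anti HP).
  - apply (inf2_glb _ _ _ _ (lr_inf HP z')); rewrite <- ?Hl, <- ?Hr;
      [apply (le_left HP) | apply (le_right HP)].
  - apply (inf2_glb _ _ _ _ (lr_inf HP z)); rewrite ?Hl, ?Hr;
      [apply (le_left HP) | apply (le_right HP)].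
Qed.

Lemma B1 {D} {le : D->D->Prop} {left right : D -> D}
  (HP : interval_poset le left right) p :
  maximal le p -> left p = p /\ right p = p.
Proof.
  intros Hp. split; apply Hp; [apply (le_left HP) | apply (le_right HP)].
Qed.


Lemma B2 {D} {le : D->D->Prop} {left right : D -> D}
  (HP : interval_poset le left right) x p :
  maximal le p -> le x p -> max_le left right (left x) p /\ max_le left right p (right x).
Proof.
  intros Hp Hxp. destruct HP as [_ [_ [_ [_ H]]]].
  destruct (H x p Hp Hxp) as [[z [_ [H1 H2]]] [z' [_ [H3 H4]]]].
  split; [exists z | exists z']; auto.
Qed.

Lemma R_refl {D} {le : D->D->Prop} {left right : D -> D}
  (HP : interval_poset le left right) p :
  maximal le p -> max_le left right p p.
Proof. intros Hp. exists p. apply (B1 HP p Hp). Qed.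

Lemma R_maxl {D} {le : D->D->Prop} {left right : D -> D}
  (HP : interval_poset le left right) a b :
  max_le left right a b -> maximal le a.
Proof. intros [z [<- _]]. apply (maxL HP). Qed.

Lemma R_maxr {D} {le : D->D->Prop} {left right : D -> D}
  (HP : interval_poset le left right) a b :
  max_le left right a b -> maximal le b.
Proof. intros [z [_ <-]]. apply (maxR HP). Qed.

Lemma comb {D} {le : D->D->Prop} {left right : D -> D}
  (HP : interval_poset le left right) z c :
  max_le left right (right z) c ->
  exists y, left y = left z /\ right y = c /\ le y z.
Proof.
  intros [w [Hw1 Hw2]]. destruct HP as [A1 [A2 [A3 [A4 A5]]]].
  destruct (A4 z w (eq_sym Hw1)) as [y [Hy [H1 H2]]].
  exists y. split; auto. split. congruence. apply (inf2_lb _ _ _ Hy).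
Qed.

Lemma comb' {D} {le : D->D->Prop} {left right : D -> D}
  (HP : interval_poset le left right) z c :
  max_le left right c (left z) ->
  exists y, left y = c /\ right y = right z /\ le y z.
Proof.
  intros [w [Hw1 Hw2]]. destruct HP as [A1 [A2 [A3 [A4 A5]]]].
  destruct (A4 w z Hw2) as [y [Hy [H1 H2]]].
  exists y. split. congruence. split. auto. apply (inf2_lb _ _ _ Hy).
Qed.

Lemma R_trans {D} {le : D->D->Prop} {left right : D -> D}
  (HP : interval_poset le left right) a b c :
  max_le left right a b -> max_le left right b c -> max_le left right a c.
Proof.
  intros [z [<- <-]] H. destruct (comb HP z c H) as [y [H1 [H2 _]]].
  exists y; auto.
Qed.

Lemma R_anti {D} {le : D->D->Prop} {left right : D -> D}
  (HP : interval_poset le left right) a b :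
  max_le left right a b -> max_le left right b a -> a = b.
Proof.
  intros [z [<- <-]] H. destruct (comb HP z _ H) as [y [H1 [H2 H3]]].
  assert (Hy : y = left z).
  { apply (B0 HP). rewrite H1. symmetry. apply (B1 HP), (maxL HP).
    rewrite H2. symmetry. apply (B1 HP), (maxL HP). }
  subst y. symmetry. apply (maxL HP z).
  eapply (po_trans HP). exact H3. apply (le_right HP).
Qed.

Lemma F3 {D} {le : D->D->Prop} {left right : D -> D}
  (HP : interval_poset le left right) z p :
  max_le left right (left z) p -> max_le left right p (right z) -> le z p.
Proof.
  intros [z1 [H1 H2]] H.
  assert (H' : max_le left right (right z1) (right z)) by congruence.
  destruct (comb HP z1 _ H') as [y [Hy1 [Hy2 Hy3]]].
  assert (y = z) by (apply (B0 HP); congruence). subst y.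
  eapply (po_trans HP). exact Hy3. rewrite <- H2. apply (le_right HP).
Qed.

Lemma F4 {D} {le : D->D->Prop} {left right : D -> D}
  (HP : interval_poset le left right) z w :
  max_le left right (left z) (left w) -> max_le left right (right w) (right z) -> le z w.
Proof.
  intros H1 H2. assert (Hw : max_le left right (left w) (right w)) by (exists w; auto).
  apply (inf2_glb _ _ _ _ (lr_inf HP w)); apply (F3 HP).
  - exact H1.
  - eapply (R_trans HP); eauto.
  - eapply (R_trans HP); eauto.
  - exact H2.
Qed.

Lemma WB_le {D} {le : D->D->Prop} {left right : D -> D}
  (HP : interval_poset le left right) a b :
  way_below_in full le a b -> le a b.
Proof.
  intros H. destruct (H (fun w => w = b)) with (s := b) as [z [-> Hz]]; auto.
  - intros x _; exact I.
  - split. exists b; auto. intros x y -> ->. exists b; split; auto; split; apply (po_refl HP).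
  - split. exact I. split. intros s ->; apply (po_refl HP). intros v _ Hv; apply Hv; auto.
  - apply (po_refl HP).
Qed.

Lemma WB_R {D} {le : D->D->Prop} {left right : D -> D}
  (HP : interval_poset le left right) a b :
  maximal le b -> way_below_in (maximal le) (max_le left right) a b -> max_le left right a b.
Proof.
  intros Hb H. destruct (H (fun w => w = b)) with (s := b) as [z [-> Hz]]; auto.
  - intros x ->; auto.
  - split. exists b; auto. intros x y -> ->. exists b; split; auto; split; apply (R_refl HP); auto.
  - split. exact Hb. split. intros s ->; apply (R_refl HP); auto. intros v _ Hv; apply Hv; auto.
  - apply (R_refl HP); auto.
Qed.

Definition Tset_r {D} (left right : D -> D) (S : D -> Prop) v :=
  fun w => right w = v /\ exists u, S u /\ left w = left u.
Definition Tset_l {D} (left right : D -> D) (S : D -> Prop) v :=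
  fun w => left w = v /\ exists u, S u /\ right w = right u.

Lemma DirR {D} {le : D->D->Prop} {left right : D -> D}
  (HP : interval_poset le left right) (S : D -> Prop) v :
  directed le S -> (forall u, S u -> max_le left right (left u) v) ->
  directed le (Tset_r left right S v).
Proof.
  intros [[u0 Hu0] Hd] Hv. split.
  - destruct (Hv u0 Hu0) as [w [H1 H2]]. exists w. split; auto. exists u0; auto.
  - intros w1 w2 [Hr1 [u1 [Hu1 Hl1]]] [Hr2 [u2 [Hu2 Hl2]]].
    destruct (Hd u1 u2 Hu1 Hu2) as [u3 [Hu3 [H13 H23]]].
    destruct (Hv u3 Hu3) as [w3 [H1 H2]].
    assert (Hmv : maximal le v) by (apply (R_maxr HP) with (left u0); auto).
    exists w3. split. split; auto. exists u3; auto.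
    split; apply (F4 HP).
    + rewrite Hl1, H1. apply (B2 HP). apply (maxL HP).
      eapply (po_trans HP); [exact H13 | apply (le_left HP)].
    + rewrite H2, Hr1. apply (R_refl HP); auto.
    + rewrite Hl2, H1. apply (B2 HP). apply (maxL HP).
      eapply (po_trans HP); [exact H23 | apply (le_left HP)].
    + rewrite H2, Hr2. apply (R_refl HP); auto.
Qed.

Lemma DirL {D} {le : D->D->Prop} {left right : D -> D}
  (HP : interval_poset le left right) (S : D -> Prop) v :
  directed le S -> (forall u, S u -> max_le left right v (right u)) ->
  directed le (Tset_l left right S v).
Proof.
  intros [[u0 Hu0] Hd] Hv. split.
  - destruct (Hv u0 Hu0) as [w [H1 H2]]. exists w. split; auto. exists u0; auto.
  - intros w1 w2 [Hr1 [u1 [Hu1 Hl1]]] [Hr2 [u2 [Hu2 Hl2]]].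
    destruct (Hd u1 u2 Hu1 Hu2) as [u3 [Hu3 [H13 H23]]].
    destruct (Hv u3 Hu3) as [w3 [H1 H2]].
    assert (Hmv : maximal le v) by (apply (R_maxl HP) with (right u0); auto).
    exists w3. split. split; auto. exists u3; auto.
    split; apply (F4 HP).
    + rewrite H1, Hr1. apply (R_refl HP); auto.
    + rewrite Hl1, H2. apply (B2 HP). apply (maxR HP).
      eapply (po_trans HP); [exact H13 | apply (le_right HP)].
    + rewrite H1, Hr2. apply (R_refl HP); auto.
    + rewrite Hl2, H2. apply (B2 HP). apply (maxR HP).
      eapply (po_trans HP); [exact H23 | apply (le_right HP)].
Qed.

Lemma SupR {D} {le : D->D->Prop} {left right : D -> D}
  (HD : interval_domain le left right) (S : D -> Prop) q v t :
  directed le S -> maximal le q -> subset S (fun w => right w = q) ->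
  maximal le v -> (forall u, S u -> max_le left right (left u) v) ->
  is_sup_in full le S t -> max_le left right (left t) v.
Proof.
  intros Hd Hq HS Hv Huv Ht.
  destruct HD as [HP [[_ Hdcpo] [_ [_ [_ [Hiiib _]]]]]].
  pose proof (DirR HP S v Hd Huv) as Hd'.
  destruct (Hdcpo (Tset_r left right S v)) as [t'' Ht'']. intros x _; exact I. exact Hd'.
  destruct (Hiiib v q S Hv Hq Hd HS t Ht) as [_ H].
  rewrite (H (Tset_r left right S v) t'' Hd').
  - exists t''. split; auto.
    destruct (Hiiib v v (Tset_r left right S v) Hv Hv Hd') with (s := t'') as [H1 _]; auto.
    intros w [Hw _]; auto.
  - intros w [Hw _]; auto.
  - intros r; split.
    + intros [u [Hu <-]]. destruct (Huv u Hu) as [w [H1 H2]].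
      exists w. split; auto. split; auto. exists u; auto.
    + intros [w [[_ [u [Hu Hl]]] <-]]. exists u; auto.
  - exact Ht''.
Qed.

Lemma SupL {D} {le : D->D->Prop} {left right : D -> D}
  (HD : interval_domain le left right) (S : D -> Prop) p v t :
  directed le S -> maximal le p -> subset S (fun w => left w = p) ->
  maximal le v -> (forall u, S u -> max_le left right v (right u)) ->
  is_sup_in full le S t -> max_le left right v (right t).
Proof.
  intros Hd Hp HS Hv Huv Ht.
  destruct HD as [HP [[_ Hdcpo] [_ [_ [Hiiia _]]]]].
  pose proof (DirL HP S v Hd Huv) as Hd'.
  destruct (Hdcpo (Tset_l left right S v)) as [t'' Ht'']. intros x _; exact I. exact Hd'.
  destruct (Hiiia p v S Hp Hv Hd HS t Ht) as [_ H].
  rewrite (H (Tset_l left right S v) t'' Hd').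
  - exists t''. split; auto.
    destruct (Hiiia v v (Tset_l left right S v) Hv Hv Hd') with (s := t'') as [H1 _]; auto.
    intros w [Hw _]; auto.
  - intros w [Hw _]; auto.
  - intros r; split.
    + intros [u [Hu <-]]. destruct (Huv u Hu) as [w [H1 H2]].
      exists w. split; auto. split; auto. exists u; auto.
    + intros [w [[_ [u [Hu Hl]]] <-]]. exists u; auto.
  - exact Ht''.
Qed.

Lemma KEY1 {D} {le : D->D->Prop} {left right : D -> D}
  (HP : interval_poset le left right) z :
  (forall y, left y = left z -> le y z ->
     way_below_in (fun w => right w = right y) le y (right y)) ->
  way_below_in (maximal le) (max_le left right) (left z) (right z).
Proof.
  intros Hb S HS Hdir s [Ps [Hub Hleast]] Hzs.
  destruct (comb HP z s Hzs) as [y [Hly [Hry Hyz]]].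
  specialize (Hb y Hly Hyz).
  destruct (Hb (fun w => right w = s /\ exists c, S c /\ left w = c)) with (s := s)
    as [w [[Hw1 [c [Hc Hwc]]] Hyw]].
  - intros w [Hw _]; congruence.
  - destruct Hdir as [[c0 Hc0] Hd]. split.
    + destruct (Hub c0 Hc0) as [w [H1 H2]]. exists w. split; auto. exists c0; auto.
    + intros w1 w2 [Hr1 [c1 [Hc1 Hl1]]] [Hr2 [c2 [Hc2 Hl2]]].
      destruct (Hd c1 c2 Hc1 Hc2) as [c3 [Hc3 [H13 H23]]].
      destruct (Hub c3 Hc3) as [w3 [H1 H2]].
      exists w3. split. split; auto. exists c3; auto.
      split; apply (F4 HP); rewrite ?Hl1, ?Hl2, ?H1, ?H2, ?Hr1, ?Hr2; auto;
        apply (R_refl HP); auto.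
  - split. rewrite Hry. apply (B1 HP); auto. split.
    + intros w [Hw1 [c [Hc Hwc]]]. apply (F3 HP). rewrite Hwc; auto.
      rewrite Hw1. apply (R_refl HP); auto.
    + intros v Hv Hubv. rewrite Hry in Hv.
      assert (Hl : left v = s).
      { apply (R_anti HP).
        - exists v; auto.
        - apply Hleast. apply (maxL HP).
          intros c Hc. destruct (Hub c Hc) as [w [H1 H2]].
          rewrite <- H1. apply (B2 HP). apply (maxL HP).
          eapply (po_trans HP). apply Hubv. split; auto. exists c; auto.
          apply (le_left HP). }
      assert (v = s). { apply (B0 HP). rewrite Hl. symmetry; apply (B1 HP); auto.
                        rewrite Hv. symmetry; apply (B1 HP); auto. }
      subst v. apply (po_refl HP).
  - rewrite Hry. apply (po_refl HP).
  - exists c. split; auto. rewrite <- Hly, <- Hwc. apply (B2 HP). apply (maxL HP).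
    eapply (po_trans HP). exact Hyw. apply (le_left HP).
Qed.

Lemma KEY1' {D} {le : D->D->Prop} {left right : D -> D}
  (HP : interval_poset le left right) z :
  (forall y, right y = right z -> le y z ->
     way_below_in (fun w => left w = left y) le y (left y)) ->
  forall S, subset S (maximal le) -> filtered (max_le left right) S ->
  forall m, is_inf_in (maximal le) (max_le left right) S m ->
  max_le left right m (left z) -> exists s, S s /\ max_le left right s (right z).
Proof.
  intros Hcc S HS Hdir m [Pm [Hlb Hgr]] Hmz.
  destruct (comb' HP z m Hmz) as [y [Hly [Hry Hyz]]].
  specialize (Hcc y Hry Hyz).
  destruct (Hcc (fun w => left w = m /\ exists c, S c /\ right w = c)) with (s := m)
    as [w [[Hw1 [c [Hc Hwc]]] Hyw]].
  - intros w [Hw _]; congruence.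
  - destruct Hdir as [[c0 Hc0] Hd]. split.
    + destruct (Hlb c0 Hc0) as [w [H1 H2]]. exists w. split; auto. exists c0; auto.
    + intros w1 w2 [Hr1 [c1 [Hc1 Hl1]]] [Hr2 [c2 [Hc2 Hl2]]].
      destruct (Hd c1 c2 Hc1 Hc2) as [c3 [Hc3 [H13 H23]]].
      destruct (Hlb c3 Hc3) as [w3 [H1 H2]].
      exists w3. split. split; auto. exists c3; auto.
      split; apply (F4 HP); rewrite ?Hl1, ?Hl2, ?H1, ?H2, ?Hr1, ?Hr2; auto;
        apply (R_refl HP); auto.
  - split. rewrite Hly. apply (B1 HP); auto. split.
    + intros w [Hw1 [c [Hc Hwc]]]. apply (F3 HP). rewrite Hw1. apply (R_refl HP); auto.
      rewrite Hwc; auto.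
    + intros v Hv Hubv. rewrite Hly in Hv.
      assert (Hl : right v = m).
      { apply (R_anti HP).
        - apply Hgr. apply (maxR HP).
          intros c Hc. destruct (Hlb c Hc) as [w [H1 H2]].
          rewrite <- H2. apply (B2 HP). apply (maxR HP).
          eapply (po_trans HP). apply Hubv. split; auto. exists c; auto.
          apply (le_right HP).
        - exists v; auto. }
      assert (v = m). { apply (B0 HP). rewrite Hv. symmetry; apply (B1 HP); auto.
                        rewrite Hl. symmetry; apply (B1 HP); auto. }
      subst v. apply (po_refl HP).
  - rewrite Hly. apply (po_refl HP).
  - exists c. split; auto. rewrite <- Hry, <- Hwc. apply (B2 HP). apply (maxR HP).
    eapply (po_trans HP). exact Hyw. apply (le_right HP).
Qed.

Lemma KEY2 {D} {le : D->D->Prop} {left right : D -> D}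
  (HD : interval_domain le left right) z :
  way_below_in (maximal le) (max_le left right) (left z) (right z) ->
  forall y, left y = left z -> le y z ->
     way_below_in (fun w => right w = right y) le y (right y).
Proof.
  intros Hwb y Hly Hyz T HT Hdir t [Qt [ubt leastt]] Hrt.
  pose proof HD as HD'.
  destruct HD' as [HP [[_ Hdcpo] [_ [_ [_ [Hiiib _]]]]]].
  assert (Hmr : maximal le (right y)) by apply (maxR HP).
  pose proof (Hmr t Hrt) as Ht. subst t.
  destruct (Hwb (fun c => exists w, T w /\ left w = c)) with (s := right y)
    as [c [[w [Tw <-]] Hc]].
  - intros c [w [_ <-]]. apply (maxL HP).
  - destruct Hdir as [[w0 Hw0] Hd]. split.
    + exists (left w0). exists w0; auto.
    + intros c1 c2 [w1 [Hw1 <-]] [w2 [Hw2 <-]].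
      destruct (Hd w1 w2 Hw1 Hw2) as [w3 [Hw3 [H13 H23]]].
      exists (left w3). split. exists w3; auto.
      split; apply (B2 HP); try apply (maxL HP); eapply (po_trans HP);
        eauto; apply (le_left HP).
  - split. exact Hmr. split.
    + intros c [w [Tw <-]]. exists w. split; auto.
    + intros v Hv Hubv.
      destruct (Hdcpo T) as [t' Ht']. intros x _; exact I. exact Hdir.
      destruct (Hiiib v (right y) T Hv Hmr Hdir HT t' Ht') as [Hrt' _].
      assert (Ht'e : t' = right y).
      { apply Hmr. apply leastt. exact Hrt'. apply Ht'. }
      assert (H := SupR HD T (right y) v t' Hdir Hmr HT Hv).
      rewrite Ht'e in H, Ht'. rewrite (proj1 (B1 HP _ Hmr)) in H.
      apply H; [intros u Hu; apply Hubv; exists u; auto | exact Ht'].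
  - apply (B2 HP). apply (maxR HP). eapply (po_trans HP). exact Hyz. apply (le_right HP).
  - exists w. split; auto. apply (F4 HP). rewrite Hly; auto.
    rewrite (HT w Tw). apply (R_refl HP); auto.
Qed.

Lemma KEY2' {D} {le : D->D->Prop} {left right : D -> D}
  (HD : interval_domain le left right) z :
  (forall S, subset S (maximal le) -> filtered (max_le left right) S ->
   forall m, is_inf_in (maximal le) (max_le left right) S m ->
   max_le left right m (left z) -> exists s, S s /\ max_le left right s (right z)) ->
  forall y, right y = right z -> le y z ->
     way_below_in (fun w => left w = left y) le y (left y).
Proof.
  intros Hwb y Hry Hyz T HT Hdir t [Qt [ubt leastt]] Hrt.
  pose proof HD as HD'.
  destruct HD' as [HP [[_ Hdcpo] [_ [_ [Hiiia _]]]]].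
  assert (Hml : maximal le (left y)) by apply (maxL HP).
  pose proof (Hml t Hrt) as Ht. subst t.
  destruct (Hwb (fun c => exists w, T w /\ right w = c)) with (m := left y)
    as [c [[w [Tw <-]] Hc]].
  - intros c [w [_ <-]]. apply (maxR HP).
  - destruct Hdir as [[w0 Hw0] Hd]. split.
    + exists (right w0). exists w0; auto.
    + intros c1 c2 [w1 [Hw1 <-]] [w2 [Hw2 <-]].
      destruct (Hd w1 w2 Hw1 Hw2) as [w3 [Hw3 [H13 H23]]].
      exists (right w3). split. exists w3; auto.
      split; apply (B2 HP); try apply (maxR HP); eapply (po_trans HP);
        eauto; apply (le_right HP).
  - split. exact Hml. split.
    + intros c [w [Tw <-]]. exists w. split; auto.
    + intros v Hv Hubv.
      destruct (Hdcpo T) as [t' Ht']. intros x _; exact I. exact Hdir.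
      destruct (Hiiia (left y) v T Hml Hv Hdir HT t' Ht') as [Hrt' _].
      assert (Ht'e : t' = left y).
      { apply Hml. apply leastt. exact Hrt'. apply Ht'. }
      assert (H := SupL HD T (left y) v t' Hdir Hml HT Hv).
      rewrite Ht'e in H, Ht'. rewrite (proj2 (B1 HP _ Hml)) in H.
      apply H; [intros u Hu; apply Hubv; exists u; auto | exact Ht'].
  - apply (B2 HP). apply (maxL HP). eapply (po_trans HP). exact Hyz. apply (le_left HP).
  - exists w. split; auto. apply (F4 HP). rewrite (HT w Tw). apply (R_refl HP); auto.
    rewrite Hry; auto.
Qed.

Lemma upz_wb {D} {le : D->D->Prop} {left right : D -> D}
  (HD : interval_domain le left right) z :
  (exists w, way_below_in full le z w) <->
  way_below_in (maximal le) (max_le left right) (left z) (right z).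
Proof.
  pose proof HD as HD'.
  destruct HD' as [HP [_ [_ [Hii _]]]].
  pose proof (Hii z) as H. cbv zeta in H. destruct H as [Hab Hac].
  split.
  - intros Ha. apply (KEY1 HP). apply Hab; auto.
  - intros Hw. apply Hab. apply (KEY2 HD); auto.
Qed.

Lemma upz_filt {D} {le : D->D->Prop} {left right : D -> D}
  (HD : interval_domain le left right) z :
  (exists w, way_below_in full le z w) <->
  (forall S, subset S (maximal le) -> filtered (max_le left right) S ->
   forall m, is_inf_in (maximal le) (max_le left right) S m ->
   max_le left right m (left z) -> exists s, S s /\ max_le left right s (right z)).
Proof.
  pose proof HD as HD'.
  destruct HD' as [HP [_ [_ [Hii _]]]].
  pose proof (Hii z) as H. cbv zeta in H. destruct H as [Hab Hac].
  split.
  - intros Ha. apply (KEY1' HP). apply Hac; auto.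
  - intros Hw. apply Hac. apply (KEY2' HD); auto.
Qed.

Lemma WBiff {D} {le : D->D->Prop} {left right : D -> D}
  (HD : interval_domain le left right) a b :
  maximal le a -> maximal le b ->
  (way_below_in (maximal le) (max_le left right) a b <->
   forall S, subset S (maximal le) -> filtered (max_le left right) S ->
   forall m, is_inf_in (maximal le) (max_le left right) S m ->
   max_le left right m a -> exists s, S s /\ max_le left right s b).
Proof.
  intros Ha Hb. pose proof HD as HD'. destruct HD' as [HP _].
  split.
  - intros Hw. destruct (WB_R HP a b Hb Hw) as [z [<- <-]].
    apply (upz_filt HD). apply (upz_wb HD). auto.
  - intros Hf.
    destruct (Hf (fun w => w = a)) with (m := a) as [s [-> Hs]].
    + intros x ->; auto.
    + split. exists a; auto. intros x y -> ->. exists a. split; auto.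
      split; apply (R_refl HP); auto.
    + split. auto. split. intros s ->. apply (R_refl HP); auto.
      intros v _ Hv. apply Hv; auto.
    + apply (R_refl HP); auto.
    + destruct Hs as [z [<- <-]].
      apply (upz_wb HD). apply (upz_filt HD). auto.
Qed.

Lemma partI {D} {le : D->D->Prop} {left right : D -> D}
  (HD : interval_domain le left right) x :
  maximal le x ->
  directed (max_le left right) (ddarrow_in (maximal le) (max_le left right) x) /\
  is_sup_in (maximal le) (max_le left right) (ddarrow_in (maximal le) (max_le left right) x) x.
Proof.
  intros Hx. pose proof HD as HD'.
  destruct HD' as [HP [[[_ [B [_ Hcont]]] Hdcpo] [Hi _]]].
  destruct (Hcont x I) as [S [HS [Hd Hsup]]].
  assert (Hwb : forall s, S s -> way_below_in full le s x) by (intros s Hs; apply (HS s Hs)).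
  assert (Hle : forall s, S s -> le s x) by (intros s Hs; apply (WB_le HP), Hwb; auto).
  assert (HL : forall s, S s -> way_below_in (maximal le) (max_le left right) (left s) x).
  { intros s Hs. pose proof HP as HP'. destruct HP' as [_ [_ [_ [_ A5]]]].
    destruct (A5 s x Hx (Hle s Hs)) as [[z [Hz [Hl Hr]]] _].
    destruct (Hi s x Hx (Hwb s Hs)) as [Hi1 _].
    pose proof (proj1 (upz_wb HD z) (Hi1 z Hz)) as H. rewrite Hl, Hr in H. exact H. }
  set (L := fun a => exists s, S s /\ left s = a).
  assert (LP : subset L (maximal le)) by (intros a [s [_ <-]]; apply (maxL HP)).
  assert (Ldir : directed (max_le left right) L).
  { destruct Hd as [[s0 Hs0] Hd]. split. exists (left s0), s0; auto.
    intros c1 c2 [s1 [Hs1 <-]] [s2 [Hs2 <-]].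
    destruct (Hd s1 s2 Hs1 Hs2) as [s3 [Hs3 [H13 H23]]].
    exists (left s3). split. exists s3; auto.
    split; apply (B2 HP); try apply (maxL HP); eapply (po_trans HP);
      eauto; apply (le_left HP). }
  assert (Lsup : is_sup_in (maximal le) (max_le left right) L x).
  { split. auto. split.
    - intros c [s [Hs <-]]. apply (B2 HP); auto.
    - intros v Hv Hubv.
      assert (HT := DirR HP S x Hd (fun s Hs => proj1 (B2 HP s x Hx (Hle s Hs)))).
      destruct (Hdcpo _ (fun _ _ => I) HT) as [t Ht].
      assert (Hte : t = x).
      { apply Hx. apply Hsup. exact I. intros s Hs.
        destruct (proj1 (B2 HP s x Hx (Hle s Hs))) as [w [H1 H2]].
        apply (po_trans HP) with w. 2: apply (proj1 (proj2 Ht)); split; auto; exists s; auto.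
        apply (F4 HP). rewrite H1. apply (R_refl HP), (maxL HP).
        rewrite H2. apply (B2 HP); auto. }
      assert (H := SupR HD _ x v t HT Hx (fun w Hw => proj1 Hw) Hv).
      rewrite Hte, (proj1 (B1 HP x Hx)) in H. rewrite Hte in Ht. apply H; [|exact Ht].
      intros u [_ [s [Hs ->]]]. apply Hubv. exists s; auto. }
  split.
  - pose proof Ldir as [[c0 Hc0] _]. split.
    + exists c0. split. apply LP; auto. destruct Hc0 as [s [Hs <-]]. apply HL; auto.
    + intros a1 a2 [Pa1 W1] [Pa2 W2].
      destruct (W1 L LP Ldir x Lsup (R_refl HP x Hx)) as [c1 [Hc1 R1]].
      destruct (W2 L LP Ldir x Lsup (R_refl HP x Hx)) as [c2 [Hc2 R2]].
      destruct (proj2 Ldir c1 c2 Hc1 Hc2) as [c3 [Hc3 [R13 R23]]].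
      exists c3. split. split. apply LP; auto. destruct Hc3 as [s [Hs <-]]. apply HL; auto.
      split; eapply (R_trans HP); eauto.
  - split. auto. split.
    + intros a [Pa W]. apply (WB_R HP); auto.
    + intros v Hv Hubv. apply Lsup; auto. intros c Hc. apply Hubv. split. apply LP; auto.
      destruct Hc as [s [Hs <-]]. apply HL; auto.
Qed.

Lemma partIII {D} {le : D->D->Prop} {left right : D -> D}
  (HD : interval_domain le left right) x :
  maximal le x ->
  filtered (max_le left right) (uuarrow_in (maximal le) (max_le left right) x) /\
  is_inf_in (maximal le) (max_le left right) (uuarrow_in (maximal le) (max_le left right) x) x.
Proof.
  intros Hx. pose proof HD as HD'.
  destruct HD' as [HP [[[_ [B [_ Hcont]]] Hdcpo] [Hi _]]].
  destruct (Hcont x I) as [S [HS [Hd Hsup]]].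
  assert (Hwb : forall s, S s -> way_below_in full le s x) by (intros s Hs; apply (HS s Hs)).
  assert (Hle : forall s, S s -> le s x) by (intros s Hs; apply (WB_le HP), Hwb; auto).
  assert (HL : forall s, S s -> way_below_in (maximal le) (max_le left right) x (right s)).
  { intros s Hs. pose proof HP as HP'. destruct HP' as [_ [_ [_ [_ A5]]]].
    destruct (A5 s x Hx (Hle s Hs)) as [_ [z [Hz [Hl Hr]]]].
    destruct (Hi s x Hx (Hwb s Hs)) as [_ Hi2].
    pose proof (proj1 (upz_wb HD z) (Hi2 z Hz)) as H. rewrite Hl, Hr in H. exact H. }
  set (L := fun a => exists s, S s /\ right s = a).
  assert (LP : subset L (maximal le)) by (intros a [s [_ <-]]; apply (maxR HP)).
  assert (Ldir : filtered (max_le left right) L).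
  { destruct Hd as [[s0 Hs0] Hd]. split. exists (right s0), s0; auto.
    intros c1 c2 [s1 [Hs1 <-]] [s2 [Hs2 <-]].
    destruct (Hd s1 s2 Hs1 Hs2) as [s3 [Hs3 [H13 H23]]].
    exists (right s3). split. exists s3; auto.
    split; apply (B2 HP); try apply (maxR HP); eapply (po_trans HP);
      eauto; apply (le_right HP). }
  assert (Lsup : is_inf_in (maximal le) (max_le left right) L x).
  { split. auto. split.
    - intros c [s [Hs <-]]. apply (B2 HP); auto.
    - intros v Hv Hubv.
      assert (HT := DirL HP S x Hd (fun s Hs => proj2 (B2 HP s x Hx (Hle s Hs)))).
      destruct (Hdcpo _ (fun _ _ => I) HT) as [t Ht].
      assert (Hte : t = x).
      { apply Hx. apply Hsup. exact I. intros s Hs.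
        destruct (proj2 (B2 HP s x Hx (Hle s Hs))) as [w [H1 H2]].
        apply (po_trans HP) with w. 2: apply (proj1 (proj2 Ht)); split; auto; exists s; auto.
        apply (F4 HP). rewrite H1. apply (B2 HP); auto.
        rewrite H2. apply (R_refl HP), (maxR HP). }
      assert (H := SupL HD _ x v t HT Hx (fun w Hw => proj1 Hw) Hv).
      rewrite Hte, (proj2 (B1 HP x Hx)) in H. rewrite Hte in Ht. apply H; [|exact Ht].
      intros u [_ [s [Hs ->]]]. apply Hubv. exists s; auto. }
  split.
  - pose proof Ldir as [[c0 Hc0] _]. split.
    + exists c0. split. apply LP; auto. destruct Hc0 as [s [Hs <-]]. apply HL; auto.
    + intros a1 a2 [Pa1 W1] [Pa2 W2].
      pose proof (proj1 (WBiff HD x a1 Hx Pa1) W1) as W1'. pose proof (proj1 (WBiff HD x a2 Hx Pa2) W2) as W2'. clear W1 W2. rename W1' into W1. rename W2' into W2.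
      destruct (W1 L LP Ldir x Lsup (R_refl HP x Hx)) as [c1 [Hc1 R1]].
      destruct (W2 L LP Ldir x Lsup (R_refl HP x Hx)) as [c2 [Hc2 R2]].
      destruct (proj2 Ldir c1 c2 Hc1 Hc2) as [c3 [Hc3 [R13 R23]]].
      exists c3. split. split. apply LP; auto. destruct Hc3 as [s [Hs <-]]. apply HL; auto.
      split; [apply (R_trans HP) with c1 | apply (R_trans HP) with c2]; auto.
  - split. auto. split.
    + intros a [Pa W]. apply (WB_R HP); auto.
    + intros v Hv Hubv. apply Lsup; auto. intros c Hc. apply Hubv. split. apply LP; auto.
      destruct Hc as [s [Hs <-]]. apply HL; auto.
Qed.

Theorem mainTheorem12 (D : Type) (le : D -> D -> Prop) (left right : D -> D)
  (HD : interval_domain le left right) :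
  let P := maximal le in
  let R := max_le left right in
  (forall x, P x -> directed R (ddarrow_in P R x) /\ is_sup_in P R (ddarrow_in P R x) x) /\
  (forall a b, P a -> P b ->
     (way_below_in P R a b <->
      forall S : D -> Prop, subset S P -> filtered R S ->
      forall m, is_inf_in P R S m -> R m a -> exists s, S s /\ R s b)) /\
  (forall x, P x -> filtered R (uuarrow_in P R x) /\ is_inf_in P R (uuarrow_in P R x) x) /\
  bicontinuous_poset P R.
Proof.
  intros P R. pose proof HD as HD'. destruct HD' as [HP _].
  assert (H1 : forall x, P x -> directed R (ddarrow_in P R x) /\ is_sup_in P R (ddarrow_in P R x) x)
    by (intros x Hx; apply (partI HD); auto).
  assert (H2 : forall a b, P a -> P b ->
     (way_below_in P R a b <->
      forall S : D -> Prop, subset S P -> filtered R S ->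
      forall m, is_inf_in P R S m -> R m a -> exists s, S s /\ R s b))
    by (intros a b Ha Hb; apply (WBiff HD); auto).
  assert (H3 : forall x, P x -> filtered R (uuarrow_in P R x) /\ is_inf_in P R (uuarrow_in P R x) x)
    by (intros x Hx; apply (partIII HD); auto).
  split; [exact H1 | split; [exact H2 | split; [exact H3 |]]].
  split; [| split; [exact H2 | exact H3]].
  split.
  - split; [| split].
    + intros x Hx. apply (R_refl HP); auto.
    + intros x y _ _. apply (R_anti HP).
    + intros x y z _ _ _. apply (R_trans HP).
  - exists P. split. intros a Ha; auto.
    intros x Hx. exists (ddarrow_in P R x). split.
    + intros a Ha. split. apply Ha. exact Ha.
    + apply H1; auto.
Qed.
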